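(* Let $q$ be a prime dividing $|L/N|$, let $L_q\le L$ be such that $L_q/N$ is a Sylow $q$-subgroup of $L/N$, and let $\mu\in Z^1(L_q/N,F_K)$. Suppose there exists a function $\omega_q:K/N\to W_{(q)}$ such that for every $g\in L_q$ we have $\mu(gN)_{(q)}={}^g\omega_q\,\omega_q^{-1}\,\nu_g$ for some $\nu_g\in\Gamma$. Then $\bar\mu:L_q/N\to F_K/\Gamma$, $gN\mapsto\mu(gN)\Gamma$, is a 1-coboundary, i.e. there exists $\omega\in F_K$ with $\mu(gN)\Gamma={}^g\omega\,\omega^{-1}\Gamma$ for all $g\in L_q$.
   Context: $G$ is a profinite group, $N$ a finite index normal pro-$p$ subgroup of $G$, and $N\le K\trianglelefteq L\le G$; $\Gamma$ is a subgroup of $\mathrm{Lin}(K/N)$, the group of continuous homomorphisms $K\to\mathbb{C}^\times$ trivial on $N$. $F_K$ is the group (pointwise multiplication) of functions $K/N\to\mathbb{C}^\times$, with $L/N$ acting by ${}^gf(xN)=f(g^{-1}xgN)$. $W\le\mathbb{C}^\times$ is the group of roots of unity and $W_{(\ell)}$ its $\ell$-primary component. For each prime $\ell$ a homomorphism $\pi_\ell:\mathbb{C}^\times\to W_{(\ell)}$ restricting to the identity on $W_{(\ell)}$ is fixed, and for a function $f$ with values in $\mathbb{C}^\times$, $f_{(\ell)}:=\pi_\ell\circ f$; thus ${}^g(f_{(\ell)})=({}^gf)_{(\ell)}$. *)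

(* Defs.v *)
From mathcomp Require Import all_boot all_algebra all_fingroup all_solvable.
From mathcomp Require Import reals complex.
Set Implicit Arguments. Unset Strict Implicit. Unset Printing Implicit Defensive.
Import GRing.Theory Num.Theory.

Local Open Scope ring_scope.

Section Defs.
Variables (gT : finGroupType) (C : fieldType).

(* z lies in W_(q), the q-primary roots of unity *)
Definition primary_root (q : nat) (z : C) : Prop :=
  exists n : nat, z ^+ (q ^ n) = 1.

Definition primary_proj (q : nat) (pi : C -> C) : Prop :=
  [/\ forall z, z != 0 -> primary_root q (pi z),
      forall z w, z != 0 -> w != 0 -> pi (z * w) = pi z * pi w
    & forall z, primary_root q z -> pi z = z].

(* f : K -> C^x, i.e. an element of F_K (only values on K matter) *)
Definition FK_elem (K : {set gT}) (f : gT -> C) : Prop :=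
  forall x, x \in K -> f x != 0.

(* the action  (^g f)(x) = f(g^-1 x g) = f(x ^ g)  *)
Definition actF (g : gT) (f : gT -> C) : gT -> C := fun x => f (x ^ g)%g.

Definition is_lin (K : {set gT}) (nu : gT -> C) : Prop :=
  FK_elem K nu /\ {in K &, forall x y, nu (x * y)%g = nu x * nu y}.

Definition lin_subgroup (K : {set gT}) (Gam : (gT -> C) -> Prop) : Prop :=
  [/\ forall nu, Gam nu -> is_lin K nu,
      Gam (fun _ => 1),
      forall nu1 nu2, Gam nu1 -> Gam nu2 -> Gam (fun x => nu1 x * nu2 x)
    & forall nu, Gam nu -> Gam (fun x => (nu x)^-1)].

Definition cocycle1 (Lq K : {set gT}) (mu : gT -> gT -> C) : Prop :=
  (forall g, g \in Lq -> FK_elem K (mu g)) /\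
  (forall g h, g \in Lq -> h \in Lq ->
     forall x, x \in K -> mu (g * h)%g x = mu g x * actF g (mu h) x).

End Defs.

(* Main.v *)
Require Import Defs.
From mathcomp Require Import all_boot all_algebra all_fingroup all_solvable.
From mathcomp Require Import reals complex.
From mathcomp Require Import ring.
Import GRing.Theory Num.Theory.
Local Open Scope ring_scope.

Lemma primary_neq0 (C : fieldType) (q : nat) (z : C) :
  prime q -> primary_root q z -> z != 0.
Proof.
move=> pq [n Hn]; apply/eqP=> z0; move: Hn; rewrite z0 expr0n.
have qn : (0 < q ^ n)%N by rewrite expn_gt0 prime_gt0.
by rewrite (negbTE (lt0n_neq0 qn)) /= => /eqP; rewrite eq_sym oner_eq0.
Qed.

Arguments primary_neq0 [C q z].

Lemma pi_inv (C : fieldType) (q : nat) (pi : C -> C) (z : C) :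
  prime q -> primary_proj q pi -> z != 0 -> pi z^-1 = (pi z)^-1.
Proof.
move=> pq [H1 H2 H3] z0.
have p1 : pi 1 = 1 by apply: H3; exists 0%N; rewrite expr1n.
have H : pi z * pi z^-1 = 1 by rewrite -H2 ?invr_eq0 // mulfV.
have nz : pi z != 0 by apply: (primary_neq0 pq); apply: H1.
by rewrite -[LHS]mul1r -(mulVf nz) -mulrA H mulr1.
Qed.

Arguments pi_inv [C q pi z].

Theorem lemma3p2 (gT : finGroupType) (R : realType) (K L Lq : {group gT})
  (q : nat) (Gam : (gT -> R[i]) -> Prop) (pi : R[i] -> R[i])
  (mu : gT -> gT -> R[i]) :
  (K <| L)%g ->
  lin_subgroup K Gam ->
  primary_proj q pi ->
  prime q -> (q %| #|L|)%N ->
  (Lq \in 'Syl_q(L))%g ->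
  cocycle1 Lq K mu ->
  (exists wq : gT -> R[i],
     (forall x, x \in K -> primary_root q (wq x)) /\
     (forall g, g \in Lq -> exists nu, Gam nu /\
        forall x, x \in K -> pi (mu g x) = actF g wq x * (wq x)^-1 * nu x)) ->
  exists w : gT -> R[i], FK_elem K w /\
    (forall g, g \in Lq -> exists nu, Gam nu /\
        forall x, x \in K -> mu g x = actF g w x * (w x)^-1 * nu x).
Proof.
move=> nKL _ ppi pq _ syl [muK muC] [wq [wqK Hwq]].
have hall := syl; rewrite inE in hall.
have sLqL := pHall_sub hall; have qLq := pHall_pgroup hall.
set n := #|Lq|.
have n_gt0 : (0 < n)%N by apply: cardG_gt0.
have nq : n = (q ^ logn q n)%N by apply: card_pgroup.
pose Om y := \prod_(h in Lq) mu h y.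
pose rho y := n.-root (Om y)^-1.
have [pi1 pi2 pi3] := ppi.
have OmK y : y \in K -> Om y != 0.
  move=> yK; rewrite prodf_seq_neq0; apply/allP => h _; apply/implyP => hL.
  exact: muK.
have rhon y : rho y ^+ n = (Om y)^-1 by rewrite /rho rootCK.
have rhoK y : y \in K -> rho y != 0.
  move=> yK; apply/eqP=> r0; move: (rhon y); rewrite r0 expr0n.
  rewrite (negbTE (lt0n_neq0 n_gt0)) /= => /esym/eqP; rewrite invr_eq0.
  by rewrite (negbTE (OmK _ yK)).
have prK y : y \in K -> pi (rho y) != 0.
  by move=> yK; apply: (primary_neq0 pq); apply: pi1; apply: rhoK.
have wqK0 y : y \in K -> wq y != 0 by move=> yK; apply: (primary_neq0 pq); apply: wqK.
exists (fun y => wq y * rho y / pi (rho y)); split.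
  move=> y yK; rewrite !mulf_neq0 ?invr_eq0 //; [exact: wqK0|exact: rhoK|exact: prK].
move=> g gLq; have [nu [Gnu Hnu]] := Hwq g gLq; exists nu; split => // x xK.
have gN : g \in 'N(K)%g by apply: (subsetP (normal_norm nKL)); apply: (subsetP sLqL).
have xgK : (x ^ g)%g \in K by rewrite memJ_norm.
have key : mu g x ^+ n * Om (x ^ g)%g = Om x.
  rewrite /Om -prodr_const -big_split /=.
  rewrite [RHS](reindex_inj (mulgI g)) /=.
  have -> : \prod_(j | (g * j)%g \in Lq) mu (g * j)%g x = \prod_(j in Lq) mu (g * j)%g x.
    by apply: eq_bigl => j; rewrite groupMl.
  by apply: eq_bigr => h hL; rewrite muC.
pose eps := mu g x * rho x / rho (x ^ g)%g.
have epsn : eps ^+ n = 1.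
  rewrite /eps !exprMn exprVn !rhon invrK -key.
  have := OmK _ xgK; have := muK g gLq x xK => m0 o0.
  field; rewrite o0 /=; exact: expf_neq0.
have peps : pi eps = eps by apply: pi3; exists (logn q n); rewrite -nq.
have E1 : mu g x = eps * rho (x ^ g)%g / rho x.
  rewrite /eps; have := rhoK _ xK; have := rhoK _ xgK => a b; field.
  by rewrite a b.
have eps0 : eps != 0.
  by apply/eqP=> e0; move: epsn; rewrite e0 expr0n (negbTE (lt0n_neq0 n_gt0)) /= => /eqP; rewrite eq_sym oner_eq0.
have E2 : pi (mu g x) = eps * pi (rho (x ^ g)%g) / pi (rho x).
  have m0 := muK g gLq x xK.
  rewrite E1 pi2 ?mulf_neq0 ?invr_eq0 ?rhoK //.
  by rewrite pi2 ?rhoK // peps (pi_inv pq ppi) ?rhoK.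
have E3 : eps = pi (mu g x) * pi (rho x) / pi (rho (x ^ g)%g).
  rewrite E2; have := prK _ xK; have := prK _ xgK => a b; field; by rewrite a b.
rewrite E1 E3 Hnu // /actF.
have := prK _ xK; have := prK _ xgK; have := rhoK _ xK; have := rhoK _ xgK.
have := wqK0 _ xK; have := wqK0 _ xgK => a b c d e f.
field; by rewrite f d b e.
Qed.
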